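(* Let $K$ be a field (of arbitrary characteristic), $\phi$ the $K$-algebra endomorphism of $K[x]$ with $\phi(x)=w(x)$ where $\deg w(x)\ge 2$, and $\delta=\mathrm{id}-\phi$. If $f\in K[x]$ satisfies $f^i\in\operatorname{Im}\delta$ for all $1\le i\le 3$, then $f=0$. Consequently, $\mathfrak{r}(\operatorname{Im}\delta)=\{0\}$, and $\delta$ maps every $K$-subspace of $K[x]$ to a Mathieu subspace of $K[x]$.
   Context: $\mathrm{id}$ is the identity map of $K[x]$. For a subset $V$ of $K[x]$, $\mathfrak{r}(V)=\{a\in K[x]\mid a^m\in V\text{ for all } m\gg0\}$. A $K$-subspace $V$ of a commutative $K$-algebra $\mathcal{A}$ is a Mathieu subspace if for all $a,b\in\mathcal{A}$ with $a^m\in V$ for all $m\ge 1$, one has $a^mb\in V$ for all $m\gg 0$. *)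

(* Defs.v *)
From mathcomp Require Import all_boot all_order all_algebra.
Set Implicit Arguments. Unset Strict Implicit. Unset Printing Implicit Defensive.
Import GRing.Theory.
Local Open Scope ring_scope.

Definition phi (K : fieldType) (w : {poly K}) (p : {poly K}) : {poly K} := p \Po w.

Definition delta (K : fieldType) (w : {poly K}) (p : {poly K}) : {poly K} :=
  p - phi w p.

Definition image_of (K : fieldType) (f : {poly K} -> {poly K})
  (V : {poly K} -> Prop) : {poly K} -> Prop :=
  fun a => exists2 v, V v & a = f v.

Definition ImP (K : fieldType) (f : {poly K} -> {poly K}) : {poly K} -> Prop :=
  fun a => exists v, a = f v.

Definition rset (K : fieldType) (V : {poly K} -> Prop) : {poly K} -> Prop :=
  fun a => exists N : nat, forall m : nat, (N <= m)%N -> V (a ^+ m).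

Definition is_subspace (K : fieldType) (V : {poly K} -> Prop) : Prop :=
  V 0 /\ (forall (c : K) (u v : {poly K}), V u -> V v -> V (c *: u + v)).

Definition is_Mathieu (K : fieldType) (V : {poly K} -> Prop) : Prop :=
  is_subspace V /\
  forall a b : {poly K},
    (forall m : nat, (1 <= m)%N -> V (a ^+ m)) ->
    exists N : nat, forall m : nat, (N <= m)%N -> V (a ^+ m * b).

(* Main.v *)
Require Import Defs.
From mathcomp Require Import all_boot all_order all_algebra.
From mathcomp Require Import zify ring.
Import GRing.Theory.
Local Open Scope ring_scope.
Set Implicit Arguments.

Section Aux.
Variables (K : fieldType) (w : {poly K}).
Hypothesis hw : (2 < size w)%N.

Local Notation d := (size w).-1.
Local Notation deg h := (size h%R).-1.
Local Notation C h := (h \Po w).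

Definition inKw (h : {poly K}) := exists h', h = h' \Po w.

Lemma d_ge2 : (2 <= d)%N. Proof. lia. Qed.
Lemma w_neq0 : w != 0.
Proof. by apply/eqP => h0; move: hw; rewrite h0 size_poly0. Qed.
Lemma w_gt1 : (1 < size w)%N. Proof. lia. Qed.

Lemma degC h : deg (C h) = (deg h * d)%N.
Proof. exact: size_comp_poly. Qed.

Lemma C_inj x y : C x = C y -> x = y.
Proof.
move=> e; apply/eqP; rewrite -subr_eq0 -(comp_poly_eq0 _ (_ : (1 < size w)%N)).
  by rewrite comp_polyB e subrr.
lia.
Qed.

Lemma inKwC h : inKw (C h). Proof. by exists h. Qed.
Lemma inKw_c c : inKw c%:P. Proof. by exists c%:P; rewrite comp_polyC. Qed.
Lemma inKwD x y : inKw x -> inKw y -> inKw (x + y).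
Proof. by move=> [a ->] [b ->]; exists (a + b); rewrite comp_polyD. Qed.
Lemma inKwN x : inKw x -> inKw (- x).
Proof. by move=> [a ->]; exists (- a); rewrite -[- a]sub0r comp_polyB comp_poly0 sub0r. Qed.
Lemma inKwB x y : inKw x -> inKw y -> inKw (x - y).
Proof. by move=> hx hy; apply: inKwD => //; apply: inKwN. Qed.
Lemma inKwM x y : inKw x -> inKw y -> inKw (x * y).
Proof. by move=> [a ->] [b ->]; exists (a * b); rewrite comp_polyM. Qed.
Lemma inKwX e : inKw (w ^+ e).
Proof.
elim: e => [|e IH]; first by rewrite expr0 -polyC1; apply: inKw_c.
by rewrite exprS; apply: inKwM => //; exists 'X; rewrite comp_polyX.
Qed.

Lemma degD (x y : {poly K}) : (deg (x + y) <= maxn (deg x) (deg y))%N.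
Proof. have := size_polyD x y; lia. Qed.
Lemma degB (x y : {poly K}) : (deg (x - y) <= maxn (deg x) (deg y))%N.
Proof.
have h := size_polyD x (- y); rewrite size_polyN in h.
move: h; set a := size y; set b := size x; set c := size (x - y); lia.
Qed.
Lemma degM (x y : {poly K}) : (deg (x * y) <= deg x + deg y)%N.
Proof.
have := size_polyMleq x y.
have [->|nx] := eqVneq x 0; first by rewrite mul0r size_poly0.
have [->|ny] := eqVneq y 0; first by rewrite mulr0 size_poly0.
have := polySpred nx; have := polySpred ny; lia.
Qed.
Lemma degMc (c : K) (x : {poly K}) : (deg (c%:P * x) <= deg x)%N.
Proof. have := degM c%:P x; have := size_polyC_leq1 c; lia. Qed.
Lemma degX (x : {poly K}) n : deg (x ^+ n) = (deg x * n)%N.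
Proof. exact: size_exp. Qed.

Lemma L (c : K) (G : {poly K}) : c != 0 -> inKw G -> G != 0 ->
  forall n (a v : {poly K}), (size a <= n)%N -> (size v <= size G)%N ->
  inKw (c%:P * a * G + v) -> inKw a.
Proof.
move=> cn [g hG] Gn; elim=> [|n IH] a v ha hv [s hs].
  by move: ha; rewrite leqn0 size_poly_eq0 => /eqP ->; apply: inKw_c.
have [ha1|ha1] := leqP (size a) 1; first by rewrite (size1_polyC ha1); apply: inKw_c.
have an : a != 0 by rewrite -size_poly_eq0; lia.
have szm : size (c%:P * a * G) = (size a + size G).-1.
  rewrite size_mul ?mulf_neq0 ?polyC_eq0 // size_mul ?polyC_eq0 // size_polyC cn.
  by [].
have sz : size (C s) = (size a + size G).-1.
  by rewrite -hs size_polyDl szm //; have := polySpred Gn; lia.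
have dG : deg G = (deg g * d)%N by rewrite hG degC.
have ds := degC s.
set e := (deg s - deg g)%N.
have he : (e * d = deg a)%N.
  rewrite /e mulnBl; move: ds dG; rewrite sz; have := polySpred Gn; nia.
have wn : w ^+ e != 0 by rewrite expf_neq0 // w_neq0.
have swe : size (w ^+ e) = size a.
  by rewrite (polySpred wn) degX mulnC he -polySpred.
have lwn : lead_coef (w ^+ e) != 0 by rewrite lead_coef_eq0.
set k := lead_coef a / lead_coef (w ^+ e).
set a' := a - k *: w ^+ e.
have sa' : (size a' <= n)%N.
  have : (size a' <= (size a).-1)%N.
    apply/leq_sizeP => j hj; rewrite coefB coefZ.
    have [->|hj'] := eqVneq j (size a).-1.
      rewrite -{1}[a`_ _]/(lead_coef a) -{1}swe -[_`_(size _).-1]/(lead_coef _).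
      by rewrite /k divfK ?subrr.
    rewrite !nth_default ?mulr0 ?subrr //; rewrite ?swe; move: hj hj'; set m := size a; move/eqP; lia.
  lia.
have : inKw a'.
  apply: (IH a' v sa' hv).
  have -> : c%:P * a' * G + v = C s - c%:P * (k%:P * w ^+ e) * G.
    by rewrite /a' -hs -mul_polyC; ring.
  apply: inKwB; first exact: inKwC.
  apply: inKwM; last by exists g.
  by apply: inKwM; [apply: inKw_c | apply: inKwM; [apply: inKw_c|apply: inKwX]].
move=> ha'; have -> : a = a' + k%:P * w ^+ e by rewrite /a' -mul_polyC; ring.
by apply: inKwD => //; apply: inKwM; [apply: inKw_c | apply: inKwX].
Qed.

Lemma Cexp (x : {poly K}) n : C (x ^+ n) = (C x) ^+ n.
Proof.
elim: n => [|n IH]; first by rewrite !expr0 -polyC1 comp_polyC.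
by rewrite !exprS comp_polyM IH.
Qed.

Lemma Dbound (u z : {poly K}) : C u = u + z -> (deg u * d <= deg z)%N.
Proof.
move=> e; have hd := d_ge2.
have [->|hu] := eqVneq (deg u) 0%N; first by rewrite mul0n.
have := degC u; rewrite e => h1.
have := degD u z; rewrite h1.
have : (deg u < deg u * d)%N by nia.
lia.
Qed.

Lemma deltaC (p : {poly K}) : (size p <= 1)%N -> p - C p = 0.
Proof. by move=> h; rewrite (size1_polyC h) comp_polyC subrr. Qed.

Lemma step (f p q r : {poly K}) : f = p - C p -> f ^+ 2 = q - C q -> f ^+ 3 = r - C r ->
  f != 0 -> inKw p.
Proof.
move=> hf hf2 hf3 fn.
have hd := d_ge2.
have sp : (2 <= size p)%N.
  rewrite leqNgt; apply/negP => h; move: fn; rewrite hf deltaC ?eqxx //; lia.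
have pn : p != 0 by rewrite -size_poly_eq0; lia.
set g := C p.
have dg : deg g = (deg p * d)%N by rewrite degC.
have gn : g != 0 by rewrite -size_poly_eq0; have := polySpred pn; nia.
have [h2|h2] := eqVneq (2 : K) 0; last first.
  set u := q + p ^+ 2.
  have Cu : C u = u + (2%:P * p * g - 2%:P * p ^+ 2).
    rewrite comp_polyD Cexp -/g.
    have -> : C q = q - f ^+ 2 by rewrite hf2; ring.
    rewrite hf polyC_natr /u /g; ring.
  have bz : (deg (2%:P * p * g - 2%:P * p ^+ 2) <= deg p + deg g)%N.
    apply: leq_trans (degB _ _) _; rewrite geq_max; apply/andP; split.
      rewrite -mulrA; apply: leq_trans (degMc _ _) _; exact: degM.
    apply: leq_trans (degMc _ _) _; rewrite degX; nia.
  have bu := @Dbound u _ Cu.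
  have bu' : (deg u <= deg g)%N by nia.
  apply: (@L 2 g h2 (inKwC p) gn (size p) p (u - 2%:P * p ^+ 2) (leqnn _)).
    rewrite (polySpred gn); apply: leq_trans (leqSpred _) _; rewrite ltnS.
    apply: leq_trans (degB _ _) _; rewrite geq_max bu' /=.
    apply: leq_trans (degMc _ _) _; rewrite degX dg; nia.
  have -> : 2%:P * p * g + (u - 2%:P * p ^+ 2) = C u by rewrite Cu; ring.
  exact: inKwC.
have h3 : (-3 : K) != 0.
  apply/negP => /eqP h.
  have e3 : (3 : K) = 2 + 1 by rewrite natr1.
  move/eqP: h; rewrite oppr_eq0 e3 h2 add0r oner_eq0 //.
set t := r - p ^+ 3.
set z := 3%:P * p ^+ 2 * g - 3%:P * p * g ^+ 2.
have Ct : C t = t + z.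
  rewrite /t comp_polyB Cexp -/g.
  have -> : C r = r - f ^+ 3 by rewrite hf3; ring.
  rewrite hf /z polyC_natr -/g; ring.
have bz : (deg z <= deg p + 2 * deg g)%N.
  apply: leq_trans (degB _ _) _; rewrite geq_max; apply/andP; split.
    rewrite -mulrA; apply: leq_trans (degMc _ _) _.
    apply: leq_trans (degM _ _) _; rewrite degX; nia.
  rewrite -mulrA; apply: leq_trans (degMc _ _) _.
  apply: leq_trans (degM _ _) _; rewrite degX; nia.
have bt := @Dbound t _ Ct.
have bt' : (deg t <= 2 * deg g)%N by nia.
have Gn : g ^+ 2 != 0 by rewrite expf_neq0.
apply: (@L (-3) (g ^+ 2) h3 _ Gn (size p) p (t + 3%:P * p ^+ 2 * g) (leqnn _)).
- by apply: inKwM; apply: inKwC.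
- rewrite (polySpred Gn); apply: leq_trans (leqSpred _) _; rewrite ltnS degX.
  apply: leq_trans (degD _ _) _; rewrite geq_max; apply/andP; split; first by nia.
  rewrite -mulrA; apply: leq_trans (degMc _ _) _.
  apply: leq_trans (degM _ _) _; rewrite degX dg; nia.
- suff -> : (-3)%:P * p * g ^+ 2 + (t + 3%:P * p ^+ 2 * g) = C t by apply: inKwC.
  by rewrite Ct /z polyCN !polyC_natr; ring.
Qed.

Lemma ImC_nonconst (p : {poly K}) : p - C p != 0 -> (2 <= size (p - C p)%R)%N.
Proof.
move=> h.
have sp : (2 <= size p)%N.
  rewrite leqNgt; apply/negP => h1; move: h; rewrite deltaC ?eqxx //; lia.
have hd := d_ge2.
have pn : p != 0 by rewrite -size_poly_eq0; lia.
have Cn : C p != 0 by rewrite comp_poly_eq0 ?w_gt1.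
have hC : (size p < size (C p))%N.
  rewrite (polySpred Cn) [X in (X < _)%N](polySpred pn) ltnS degC.
  have : (0 < deg p)%N by move: sp; set m := size p; lia.
  nia.
rewrite addrC size_polyDl ?size_polyN //; exact: leq_trans sp (ltnW hC).
Qed.

Lemma part1 : forall f : {poly K},
  (forall i : nat, (1 <= i <= 3)%N -> ImP (delta w) (f ^+ i)) -> f = 0.
Proof.
move=> f; move: {2}(size f) (leqnn (size f)) => n; elim: n f => [|n IH] f hs hf.
  by apply/eqP; rewrite -size_poly_eq0; lia.
have [//|fn] := eqVneq f 0.
have [p hp] := hf 1%N isT; rewrite expr1 /delta /phi in hp.
have [q hq] := hf 2%N isT; rewrite /delta /phi in hq.
have [r hr] := hf 3%N isT; rewrite /delta /phi in hr.
have [p' ep] := @step _ _ _ _ hp hq hr fn.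
set f' := p' - C p'.
have ef : f = C f' by rewrite hp ep comp_polyB.
have Cpow : forall i, C (f' ^+ i) = f ^+ i.
  by rewrite ef; elim=> [|j IHj]; rewrite ?expr0 ?comp_polyC // !exprS comp_polyM IHj.
have key : forall i, (1 <= i <= 3)%N -> ImP (delta w) (f' ^+ i).
  move=> i hi; have [s hs'] := hf i hi; rewrite /delta /phi in hs'.
  have e1 : C (f' ^+ i + s) = s by rewrite comp_polyD Cpow hs'; ring.
  exists (f' ^+ i + s); apply: C_inj.
  by rewrite /delta /phi comp_polyB e1 Cpow hs'.
have f'n : f' != 0 by apply: contra fn => /eqP e; rewrite ef e comp_poly0.
have sf' := @ImC_nonconst p' f'n.
have hdf := degC f'; rewrite -ef in hdf.
have hd := d_ge2.
have fn' : f != 0 by [].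
have hsz : (size f' <= n)%N.
  move: hs sf' hdf (polySpred fn) (polySpred f'n).
  set a := size f; set b := size f'; nia.
by move: f'n; rewrite (IH f' hsz key) eqxx.
Qed.
End Aux.

Unset Implicit Arguments.

Theorem proposition3p7 (K : fieldType) (w : {poly K}) (hw : (2 < size w)%N) :
  (forall f : {poly K},
     (forall i : nat, (1 <= i <= 3)%N -> ImP (delta w) (f ^+ i)) -> f = 0)
  /\ (forall a : {poly K}, rset (ImP (delta w)) a <-> a = 0)
  /\ (forall V : {poly K} -> Prop, is_subspace V ->
        is_Mathieu (image_of (delta w) V)).
Proof.
have P1 := @part1 K w hw.
have d00 : delta w 0 = 0 by rewrite /delta /phi comp_poly0 subr0.
split; first exact: P1.
split.
  move=> a; split.
    move=> [N hN].
    have : a ^+ N.+1 = 0.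
      apply: P1 => i /andP[hi1 hi3]; rewrite -exprM; apply: hN; nia.
    by move/eqP; rewrite expf_eq0 => /andP[_ /eqP].
  move=> ->; exists 1%N => m hm; exists 0; rewrite d00 expr0n.
  by case: m hm.
move=> V [V0 VS]; split.
  split; first by exists 0.
  move=> c _ _ [u Vu ->] [v Vv ->]; exists (c *: u + v); first exact: VS.
  rewrite /delta /phi comp_polyD comp_polyZ -!mul_polyC; ring.
move=> a b ha.
have a0 : a = 0.
  apply: P1 => i /andP[hi _]; have [v _ ->] := ha i hi; by exists v.
exists 1%N => m hm; exists 0 => //; rewrite d00 a0 expr0n.
by case: m hm => // m _; rewrite mul0r.
Qed.
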